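(* Let $t=\lceil\frac{n-\kappa}{2}\rceil$ and write $\mathrm{Small}(x)=\mathrm{Small}_t(x)$. Suppose $\mathrm{Small}(u)$ exists and $v\in\mathrm{Side}_{\mathrm{Small}(u)}(u)$. Then $\mathrm{Small}(v)$ exists, $\mathrm{Side}_{\mathrm{Small}(v)}(v)\subseteq\mathrm{Side}_{\mathrm{Small}(u)}(u)$, and either $\mathrm{Small}(v)=\mathrm{Small}(u)$ or $\mathrm{Small}(v)\subseteq\mathrm{Small}(u)\cup\mathrm{Side}_{\mathrm{Small}(u)}(u)$ (i.e. $\mathrm{Small}(v)$ is a laminar cut of $\mathrm{Small}(u)$).
   Context: $G=(V,E)$ is a finite, simple, connected, undirected, non-complete graph with $n=|V|$; $\kappa$ is its vertex connectivity, assumed $\kappa<n/4$. A cut is a set $U\subset V$ whose removal disconnects $G$; a $\kappa$-cut is a cut of size $\kappa$; a side of $U$ is a connected component of the subgraph induced on $V\setminus U$; $\mathrm{Side}_U(x)$ is the side containing $x\notin U$. For a vertex $x$ and $t\le\lceil\frac{n-\kappa}{2}\rceil$, $\mathrm{Small}_t(x)$ denotes, when it exists, the unique $\kappa$-cut $Y$ with $x\notin Y$, $|\mathrm{Side}_Y(x)|\le t$, and $\mathrm{Side}_Y(x)\subseteq\mathrm{Side}_U(x)$ for every $\kappa$-cut $U$ with $x\notin U$ and $|\mathrm{Side}_U(x)|\le t$ (it exists iff some $\kappa$-cut $U$ with $x\notin U$ has $|\mathrm{Side}_U(x)|\le t$). *)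

(* Defs.v *)
From mathcomp Require Import all_boot.
Set Implicit Arguments. Unset Strict Implicit. Unset Printing Implicit Defensive.

Section Graph.
Variables (T : finType) (e : rel T).

Definition simple_graph := symmetric e /\ irreflexive e.
Definition graph_connected := forall x y : T, connect e x y.
Definition non_complete := exists x y : T, (x != y) && ~~ e x y.

Definition erem (U : {set T}) : rel T :=
  [rel x y | [&& e x y, x \notin U & y \notin U]].

Definition is_cut (U : {set T}) : bool :=
  [exists x, exists y, [&& x \notin U, y \notin U & ~~ connect (erem U) x y]].

Definition vertex_connectivity (k : nat) : Prop :=
  (exists U, is_cut U /\ #|U| = k) /\ (forall U, is_cut U -> k <= #|U|).

Definition kcut (k : nat) (U : {set T}) : bool := is_cut U && (#|U| == k).

Definition Side (U : {set T}) (x : T) : {set T} :=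
  [set y | (y \notin U) && connect (erem U) x y].

Definition is_small (k t : nat) (x : T) (Y : {set T}) : bool :=
  [&& kcut k Y, x \notin Y, #|Side Y x| <= t &
   [forall U : {set T}, (kcut k U && (x \notin U) && (#|Side U x| <= t))
                          ==> (Side Y x \subset Side U x)]].

(* Small_t(x), when it exists (it is unique when it exists) *)
Definition Small (k t : nat) (x : T) : option {set T} :=
  [pick Y | is_small k t x Y].
End Graph.

(* Main.v *)
Require Import Defs.
From mathcomp Require Import all_boot.
From mathcomp Require Import zify.
Set Implicit Arguments.

Lemma connect_inv (T : finType) (r : rel T) (P : pred T) x y :
  (forall a b, P a -> r a b -> P b) -> P x -> connect r x y -> P y.
Proof.
move=> HP Px /connectP [p pth ->]; elim: p x Px pth => [|z p IH] x Px //= /andP [rxz pth].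
exact: IH (HP _ _ Px rxz) pth.
Qed.

Lemma side_sep (T : finType) (e : rel T) (Z S : {set T}) v :
  v \in S -> (forall a b, a \in S -> e a b -> b \notin Z -> b \in S) ->
  Side e Z v \subset S.
Proof.
move=> vS H; apply/subsetP => y; rewrite inE => /andP [_ c].
apply: (@connect_inv _ _ (fun z => z \in S) _ _ _ _ c) => // a b aS.
rewrite /erem /= => /and3P [eab _ bZ]; exact: (H a b aS eab bZ).
Qed.

Lemma cut_sep (T : finType) (e : rel T) (Z S : {set T}) v y :
  v \in S -> v \notin Z -> (forall a b, a \in S -> e a b -> b \notin Z -> b \in S) ->
  y \notin Z -> y \notin S -> is_cut e Z.
Proof.
move=> vS vZ H yZ yS; apply/existsP; exists v; apply/existsP; exists y; rewrite vZ yZ /=.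
apply/negP => c; have : y \in Side e Z v by rewrite inE yZ c.
by move/(subsetP (@side_sep _ e Z S v vS H)); rewrite (negbTE yS).
Qed.

Lemma nbr_side (T : finType) (e : rel T) (U : {set T}) x a b :
  a \in Side e U x -> e a b -> b \notin U -> b \in Side e U x.
Proof.
rewrite !inE => /andP [aU c] eab bU; rewrite bU /=.
apply: connect_trans c (connect1 _); by rewrite /erem /= eab aU bU.
Qed.

Lemma erem_sym (T : finType) (e : rel T) U : symmetric e -> symmetric (erem e U).
Proof. by move=> se x y; rewrite /erem /= se (andbC (x \notin U)). Qed.

Lemma side_eq (T : finType) (e : rel T) U u v :
  symmetric e -> v \in Side e U u -> Side e U v = Side e U u.
Proof.
move=> se; rewrite inE => /andP [_ c]; apply/setP => y; rewrite !inE.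
case: (y \in U) => //=; apply/idP/idP => c2; first exact: connect_trans c c2.
rewrite (sym_connect_sym (erem_sym U se)) in c; exact: connect_trans c c2.
Qed.

Lemma side_self (T : finType) (e : rel T) (U : {set T}) v : v \notin U -> v \in Side e U v.
Proof. by move=> vU; rewrite inE vU connect0. Qed.

Lemma cross (T : finType) (e : rel T) (k t : nat) v (U W : {set T}) :
  (forall U, is_cut e U -> k <= #|U|) ->
  2 * t <= (#|T| - k).+1 -> t + k < #|T| ->
  kcut e k U -> kcut e k W -> v \notin U -> v \notin W ->
  #|Side e U v| <= t -> #|Side e W v| <= t ->
  exists X, [/\ kcut e k X, v \notin X & Side e X v \subset Side e U v :&: Side e W v].
Proof.
move=> kmin t2 tk /andP [_ /eqP cU] /andP [_ /eqP cW] vU vW sA sB.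
set A := Side e U v; set B := Side e W v.
have vA : v \in A by exact: side_self. have vB : v \in B by exact: side_self.
have AU : forall y, y \in A -> y \notin U by move=> y; rewrite inE => /andP[].
have BW : forall y, y \in B -> y \notin W by move=> y; rewrite inE => /andP[].
have AU' : forall y, ~~ ((y \in A) && (y \in U)).
  by move=> y; case yA: (y \in A) => //=; exact: AU.
have BW' : forall y, ~~ ((y \in B) && (y \in W)).
  by move=> y; case yB: (y \in B) => //=; exact: BW.
have nA : forall a b, a \in A -> e a b -> b \notin U -> b \in A.
  by move=> a b; exact: nbr_side.
have nB : forall a b, a \in B -> e a b -> b \notin W -> b \in B.
  by move=> a b; exact: nbr_side.
have sA' : #|A| <= t := sA. have sB' : #|B| <= t := sB.
clearbody A B; clear sA sB; rename sA' into sA; rename sB' into sB.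
set X := [set y | [&& (y \in A) || (y \in U), (y \in B) || (y \in W) & ~~ ((y \in A) && (y \in B))]].
set X' := [set y | ((y \in U) && (y \notin B)) || ((y \in W) && (y \notin A))].
have XU : X :|: X' = U :|: W.
  apply/setP => y; rewrite !inE; move: (AU' y) (BW' y).
  by case: (y \in A); case: (y \in B); case: (y \in U); case: (y \in W).
have XI : X :&: X' = U :&: W.
  apply/setP => y; rewrite !inE; move: (AU' y) (BW' y).
  by case: (y \in A); case: (y \in B); case: (y \in U); case: (y \in W).
have cX : #|X| + #|X'| = 2 * k by have := cardsUI X X'; rewrite XU XI cardsUI cU cW; lia.
have cAB : #|A :|: B| + #|A :&: B| <= 2 * t by rewrite cardsUI; lia.
have cAB1 : 0 < #|A :&: B| by apply/card_gt0P; exists v; rewrite inE vA vB.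
have X'k : k <= #|X'|.
  case: (boolP [exists y, [&& y \notin A, y \notin U, y \notin B & y \notin W]]).
    move=> /existsP [y /and4P [yA yU yB yW]]; apply: kmin.
    apply: (@cut_sep _ _ _ (A :|: B) v y).
    - by rewrite inE vA.
    - by rewrite inE negb_or !negb_and vU vW.
    - move=> a b; rewrite !inE => /orP [aA|aB] eab bX.
        case bU: (b \in U); last by rewrite (nA _ _ aA eab) ?bU.
        by move: bX; rewrite bU /= negb_or => /andP [/negbNE bB _]; rewrite bB orbT.
      case bW: (b \in W); last by rewrite (nB _ _ aB eab) ?bW ?orbT.
      by move: bX; rewrite bW /= negb_or => /andP [_ /negbNE bA]; rewrite bA.
    - by rewrite inE negb_or !negb_and yU yW.
    - by rewrite inE negb_or yA yB.
  move=> /existsPn H.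
  have : [set: T] \subset (A :|: B) :|: X'.
    apply/subsetP => y _; move: (H y); rewrite !inE.
    move: (AU' y) (BW' y).
    by case: (y \in A); case: (y \in B); case: (y \in U); case: (y \in W).
  move/subset_leq_card; rewrite cardsT => H2.
  have := leq_trans H2 (leq_card_setU _ _); lia.
have Xk : #|X| <= k by lia.
have clos : forall a b, a \in A :&: B -> e a b -> b \notin X -> b \in A :&: B.
  move=> a b; rewrite inE => /andP [aA aB] eab; rewrite !inE.
  have bAU : (b \in A) || (b \in U).
    by case bU: (b \in U); rewrite ?orbT // (nA _ _ aA eab) ?bU.
  have bBW : (b \in B) || (b \in W).
    by case bW: (b \in W); rewrite ?orbT // (nB _ _ aB eab) ?bW.
  by rewrite bAU bBW /= negbK.
have vX : v \notin X by rewrite inE vA vB.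
have [y yX yAB] : exists2 y, y \notin X & y \notin A :&: B.
  have : 0 < #|~: (X :|: A :&: B)|.
    have := cardsC (X :|: A :&: B); have := (leq_card_setU X (A :&: B)).1.
    have : #|A :&: B| <= t by apply: leq_trans (subset_leq_card (subsetIl _ _)) sA.
    lia.
  by move/card_gt0P => [y]; rewrite in_setC in_setU negb_or => /andP [H1 H2]; exists y.
have cutX : is_cut e X by apply: (@cut_sep _ e X (A :&: B) v y) => //; rewrite in_setI vA.
exists X; split => //; last by apply: side_sep => //; rewrite inE vA vB.
by rewrite /kcut cutX eqn_leq Xk kmin.
Qed.

Unset Implicit Arguments.

Theorem lemma6 (T : finType) (e : rel T) (k : nat) (u v : T) (Yu : {set T}) :
  simple_graph e -> graph_connected e -> non_complete e ->
  vertex_connectivity e k -> 4 * k < #|T| ->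
  let t := (#|T| - k).+1 %/ 2 in
  Small e k t u = Some Yu ->
  v \in Side e Yu u ->
  exists Yv : {set T},
    [/\ Small e k t v = Some Yv,
        Side e Yv v \subset Side e Yu u &
        Yv = Yu \/ Yv \subset Yu :|: Side e Yu u].
Proof.
move=> [se ie] gc [x0 [y0 /andP [nxy _]]] [_ kmin] nk t Hu vS.
have t2 : 2 * t <= (#|T| - k).+1 by rewrite /t mulnC leq_trunc_div.
have n2 : 1 < #|T|.
  have := cards2 x0 y0; rewrite nxy => <-; apply: max_card.
have tk : t + k < #|T| by lia.
move: Hu; rewrite /Small; case: pickP => // Y0 HY0 [eY]; subst Y0.
move: HY0 => /and4P [kYu uYu sYu minYu].
have vYu : v \notin Yu by move: vS; rewrite inE => /andP [].
have eS : Side e Yu v = Side e Yu u := side_eq se vS.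
pose P := fun Y => [&& kcut e k Y, v \notin Y & #|Side e Y v| <= t].
have PYu : P Yu by rewrite /P kYu vYu eS sYu.
case: (arg_minnP (fun Y => #|Side e Y v|) PYu) => Ym PYm minYm.
have smallYm : is_small e k t v Ym.
  move: PYm => /and3P [kYm vYm sYm]; rewrite /is_small kYm vYm sYm /=.
  apply/forallP => W; apply/implyP => /andP [/andP [kW vW] sW].
  have [X [kX vX sX]] := @cross T e k t v Ym W kmin t2 tk kYm kW vYm vW sYm sW.
  have sAB := subset_leq_card sX.
  have PX : P X.
    rewrite /P kX vX /=; apply: leq_trans sAB _.
    exact: leq_trans (subset_leq_card (subsetIl _ _)) sYm.
  have := minYm X PX => Hm.
  have : Side e Ym v :&: Side e W v == Side e Ym v.
    by rewrite eqEcard subsetIl (leq_trans Hm sAB).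
  by move/eqP/setIidPl.
rewrite /Small; case: pickP => [Yv HYv | H]; last by have := H Ym; rewrite smallYm.
exists Yv; move: HYv => /and4P [kYv vYv sYv minYv].
have sub : Side e Yv v \subset Side e Yu u.
  rewrite -eS; have := forallP minYv Yu; rewrite kYu vYu eS sYu /=.
  by [].
split => //; right.
set S := Side e Yv v.
set Z := Yv :&: (Yu :|: Side e Yu u).
have clos : forall a b, a \in S -> e a b -> b \notin Z -> b \in S.
  move=> a b aS eab bZ; case bY: (b \in Yv); last by rewrite (@nbr_side _ e _ _ a b aS eab) ?bY.
  have aU := subsetP sub a aS.
  case bU: (b \in Yu).
    by move: bZ; rewrite in_setI in_setU bY bU.
  by move: bZ; rewrite in_setI in_setU bY bU (@nbr_side _ e _ _ a b aU eab) ?bU.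
have vSS : v \in S by exact: side_self.
have vZ : v \notin Z by rewrite inE (negbTE vYv).
have [y yZ yS] : exists2 y, y \notin Z & y \notin S.
  move: kYv => /andP [/existsP [x /existsP [y /and3P [xY yY ncxy]]] _].
  case xS: (x \in S); last by exists x; rewrite ?in_setI ?(negbTE xY) ?xS.
  case yS: (y \in S); last by exists y; rewrite ?in_setI ?(negbTE yY) ?yS.
  move: xS yS; rewrite !inE => /andP [_ c1] /andP [_ c2].
  rewrite (sym_connect_sym (erem_sym Yv se)) in c1.
  by rewrite (connect_trans c1 c2) in ncxy.
have cZ : is_cut e Z by apply: (@cut_sep _ e Z S v y).
have : Z == Yv.
  move: kYv => /andP [_ /eqP cY].
  by rewrite eqEcard subsetIl cY kmin.
by move/eqP => <-; rewrite subsetIr.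
Qed.
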